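(* Let $G$ be a Tanner graph with largest right (check-node) degree $d_r^+$ and $t$-value $t$, so every irreducible lift-realizable pseudocodeword $p=(p_1,\dots,p_n)$ of $G$ has $0\le p_i\le t$. Then the smallest lift degree $m_{\min}$ needed to realize all irreducible pseudocodewords of $G$ satisfies \[ m_{\min}\le \max_{u_j}\frac{\sum_{v_i\in N(u_j)}p_i}{2}\le \frac{t\,d_r^+}{2},\] where the maximum is over all check nodes $u_j$ of $G$ and $N(u_j)$ is the set of variable-node neighbours of $u_j$ (for each irreducible pseudocodeword $p$, the middle quantity bounds the smallest degree of a lift realizing $p$).
   Context: A Tanner graph $G$ is a finite bipartite graph with variable nodes $v_1,\dots,v_n$ and check nodes $u_1,\dots,u_m$; it defines the binary code of all $x\in\{0,1\}^n$ such that every check node has an even number of neighbours $v_i$ with $x_i=1$. A degree-$\ell$ lift of $G$ replaces each node by a cloud of $\ell$ copies and each edge $(x,y)$ by a perfect matching between the clouds. A lift-realizable pseudocodeword $p\in\mathbb{Z}_{\ge0}^n$ is obtained from a codeword of the code of some finite lift by letting $p_i$ be the number of copies of $v_i$ assigned 1; $p$ is realized in that lift. A pseudocodeword is irreducible if it cannot be written as a sum of two or more nonzero codewords or pseudocodewords. The $t$-value of $G$ is the maximum component value of an irreducible pseudocodeword of $G$. *)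

(* Defs.v *)
From mathcomp Require Import all_boot all_fingroup.
Set Implicit Arguments. Unset Strict Implicit. Unset Printing Implicit Defensive.

(* A Tanner graph with variable nodes 'I_n and check nodes 'I_m is given by
   its adjacency relation adj : 'I_n -> 'I_m -> bool
   (adj i j  <=>  v_i -- u_j is an edge). *)

(* A degree-l lift: for every edge (v_i,u_j) a perfect matching between the
   clouds {(i,a) | a < l} and {(j,b) | b < l}, given as a permutation sigma i j
   of 'I_l: copy a of v_i is joined to copy (sigma i j a) of u_j.
   (Entries sigma i j for non-edges are irrelevant.) *)
Definition lift_perms (n m l : nat) := 'I_n -> 'I_m -> {perm 'I_l}.

(* x : assignment of bits to the copies of the variable nodes; it is a codeword
   of the lifted code iff every copy (j,b) of every check node has an even
   number of neighbours assigned 1. *)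
Definition lift_codeword (n m l : nat) (adj : 'I_n -> 'I_m -> bool)
    (sigma : lift_perms n m l) (x : 'I_n -> 'I_l -> bool) : Prop :=
  forall (j : 'I_m) (b : 'I_l),
    ~~ odd (\sum_(i < n | adj i j) \sum_(a < l | sigma i j a == b) nat_of_bool (x i a)).

Definition realized_in_degree (n m : nat) (adj : 'I_n -> 'I_m -> bool)
    (p : 'I_n -> nat) (l : nat) : Prop :=
  0 < l /\
  exists (sigma : lift_perms n m l) (x : 'I_n -> 'I_l -> bool),
    lift_codeword adj sigma x /\
    forall i : 'I_n, p i = #|[set a : 'I_l | x i a]|.

Definition pseudocodeword (n m : nat) (adj : 'I_n -> 'I_m -> bool)
    (p : 'I_n -> nat) : Prop :=
  exists l, realized_in_degree adj p l.

Definition nonzero_vec (n : nat) (p : 'I_n -> nat) : Prop := exists i, p i != 0.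

(* irreducible: a nonzero pseudocodeword that is not the sum of two or more
   nonzero pseudocodewords (codewords are the pseudocodewords of degree-1
   lifts, so they are included). *)
Definition irreducible_pcw (n m : nat) (adj : 'I_n -> 'I_m -> bool)
    (p : 'I_n -> nat) : Prop :=
  pseudocodeword adj p /\ nonzero_vec p /\
  ~ exists qs : seq ('I_n -> nat),
      1 < size qs /\
      (forall k, k < size qs ->
         pseudocodeword adj (nth (fun _ => 0) qs k) /\ nonzero_vec (nth (fun _ => 0) qs k)) /\
      (forall i, p i = \sum_(q <- qs) q i).

Definition is_t_value (n m : nat) (adj : 'I_n -> 'I_m -> bool) (t : nat) : Prop :=
  (forall p, irreducible_pcw adj p -> forall i, p i <= t) /\
  (exists p, irreducible_pcw adj p /\ exists i, p i = t).

Definition max_check_degree (n m : nat) (adj : 'I_n -> 'I_m -> bool) : nat :=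
  \max_(j < m) #|[set i : 'I_n | adj i j]|.

Definition max_check_sum (n m : nat) (adj : 'I_n -> 'I_m -> bool)
    (p : 'I_n -> nat) : nat :=
  \max_(j < m) \sum_(i < n | adj i j) p i.

(* Main.v *)
Require Import Defs.
From mathcomp Require Import all_boot all_fingroup.
From mathcomp Require Import zify.
Set Implicit Arguments. Unset Strict Implicit. Unset Printing Implicit Defensive.

Definition Ssum (n m : nat) (adj : 'I_n -> 'I_m -> bool) (p : 'I_n -> nat) (j : 'I_m) :=
  \sum_(i < n | adj i j) p i.

Lemma card_sum (l : nat) (P : pred 'I_l) : #|[set a | P a]| = \sum_(a < l | P a) 1.
Proof. by rewrite -sum1_card; apply: eq_bigl => a; rewrite inE. Qed.

Lemma nec n m (adj : 'I_n -> 'I_m -> bool) p l (j : 'I_m) :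
  realized_in_degree adj p l ->
  ~~ odd (Ssum adj p j) /\ forall i, adj i j -> 2 * p i <= Ssum adj p j.
Proof.
case=> _ [sigma [x [cw hp]]].
have hpi : forall i, p i = \sum_(b < l) x i (((sigma i j)^-1)%g b).
  move=> i; rewrite hp card_sum big_mkcond /=.
  rewrite (reindex_inj (h := (sigma i j)^-1%g)) /=; last exact: perm_inj.
  by apply: eq_bigr => b _; case: (x i _).
have hc : forall b, \sum_(i < n | adj i j) \sum_(a < l | sigma i j a == b) x i a
   = \sum_(i < n | adj i j) x i (((sigma i j)^-1)%g b).
  move=> b; apply: eq_bigr => i _; rewrite (big_pred1 ((sigma i j)^-1%g b)) // => a.
  by apply/eqP/eqP => [<-|->]; rewrite ?permK ?permKV.
have hS : Ssum adj p j = \sum_(b < l) \sum_(i < n | adj i j) x i (((sigma i j)^-1)%g b).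
  by rewrite /Ssum (eq_bigr _ (fun i _ => hpi i)) exchange_big.
split.
  rewrite hS; apply: (big_ind (fun k => ~~ odd k)) => //.
    by move=> a b; rewrite oddD => /negbTE-> /negbTE->.
  by move=> b _; rewrite -hc; apply: cw.
move=> i0 hi0; rewrite hS hpi big_distrr /=; apply: leq_sum => b _.
have := cw j b; rewrite hc (bigD1 i0) //=.
case: (x i0 _) => //=.
set e := \sum_(i < n | _) _ => he.
have : 0 < e by case: e he => //.
lia.
Qed.
Lemma sum_lt (l p : nat) (G : nat -> nat) : p <= l ->
  \sum_(a < l | a < p) G a = \sum_(a < p) G a.
Proof.
move=> hp; rewrite -(big_mkord (fun a => a < p)) -(big_mkord xpredT).
by rewrite (big_nat_widen 0 p l) //.
Qed.

Lemma concat_sum (w F : nat -> nat) N :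
  \sum_(k < N) \sum_(a < w k) F (\sum_(k' < k) w k' + a) = \sum_(c < \sum_(k < N) w k) F c.
Proof.
elim: N => [|N IH]. rewrite big_ord0. have -> : \sum_(k < 0) w k = 0 by rewrite big_ord0. by rewrite big_ord0.
rewrite big_ord_recr /= IH big_ord_recr /= big_split_ord /=.
by congr (_ + _); apply: eq_bigr.
Qed.

Section Fv.
Variable l : nat.
Definition fv (o L : nat) (a : 'I_l) : 'I_l :=
  insubd a (if a < L then (o + a) %% L else val a).

Lemma fv_val o L a : L <= l -> val (fv o L a) = if a < L then (o + a) %% L else val a.
Proof.
move=> hL; rewrite /fv val_insubd; case: ifP => //; case: ifP => ha.
  have h : (o + a) %% L < L by rewrite ltn_pmod //; exact: leq_ltn_trans (leq0n a) ha.
  by rewrite (leq_trans h hL).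
by rewrite ltn_ord.
Qed.

Lemma fv_inj o L (hL : L <= l) : injective (fv o L).
Proof.
move=> a a' /(congr1 val); rewrite !fv_val //.
have hL0 : forall b : 'I_l, b < L -> (o + b) %% L < L.
  by move=> b hb; rewrite ltn_pmod //; exact: leq_ltn_trans (leq0n b) hb.
case: ifP => ha; case: ifP => ha' h; apply: val_inj => //=.
- move/eqP: h; rewrite eqn_modDl !modn_small //; exact/eqP.
- by have := hL0 _ ha; rewrite h ha'.
- by have := hL0 _ ha'; rewrite -h ha.
Qed.
End Fv.

Lemma suff n m (adj : 'I_n -> 'I_m -> bool) p l : 0 < l -> (forall i, exists j, adj i j) ->
 (forall j, ~~ odd (Ssum adj p j) /\ (forall i, adj i j -> 2 * p i <= Ssum adj p j)) ->
 (forall j, (Ssum adj p j)./2 <= l) -> realized_in_degree adj p l.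
Proof.
move=> l0 hadj hnec hle; split=> //.
pose w j k := if (insub k : option 'I_n) is Some i then (if adj i j then p i else 0) else 0.
pose L j := (Ssum adj p j)./2.
pose o (i : 'I_n) j := \sum_(k < i) w j k.
pose sigma : lift_perms n m l := fun i j => perm (@fv_inj l (o i j) (L j) (hle j)).
pose x (i : 'I_n) (a : 'I_l) := a < p i.
have pL : forall i j, adj i j -> p i <= L j.
  move=> i j hij; have [h1 h2] := hnec j; have := h2 i hij.
  have := odd_double_half (Ssum adj p j); rewrite /L (negbTE h1) -muln2 => h3; lia.
have pl : forall i, p i <= l.
  move=> i; have [j hij] := hadj i; exact: leq_trans (pL i j hij) (hle j).
exists sigma, x; split; last first.
  by move=> i; rewrite card_sum /x (sum_lt (fun _ => 1)) // sum_nat_const card_ord muln1.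
move=> j b.
have step1 : forall i, adj i j -> \sum_(a < l | sigma i j a == b) x i a
     = \sum_(a < p i) ((o i j + a) %% L j == b : nat).
  move=> i hij.
  transitivity (\sum_(a < l | a < p i) (sigma i j a == b : nat)).
    rewrite big_mkcond [RHS]big_mkcond; apply: eq_bigr => a _; rewrite /x.
    by case: (_ == b); case: (a < p i).
  rewrite -(@sum_lt l (p i) (fun a => ((o i j + a) %% L j == b : nat))) //.
  apply: eq_bigr => a ha; rewrite permE -val_eqE fv_val ?hle //.
  by rewrite (leq_trans ha (pL i j hij)).
rewrite (eq_bigr _ step1) big_mkcond /=.
rewrite (eq_bigr (fun i : 'I_n => \sum_(a < w j i) ((\sum_(k < i) w j k + a) %% L j == b : nat))); last first.
  move=> i _; rewrite /w valK; case: (adj i j) => //; by rewrite big_ord0.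
rewrite (concat_sum (w j) (fun c => (c %% L j == b : nat)) n).
have hS : Ssum adj p j = \sum_(k < n) w j k.
  rewrite /Ssum big_mkcond; apply: eq_bigr => i _; by rewrite /w valK.
have hsum : \sum_(k < n) w j k = L j + L j.
  rewrite -hS addnn /L.
  by have := odd_double_half (Ssum adj p j); rewrite (negbTE (proj1 (hnec j))) add0n.
rewrite hsum big_split_ord /=.
under [X in _ + X]eq_bigr => c _ do rewrite modnDl.
by rewrite addnn odd_double.
Qed.

Theorem theorem5 (n m : nat) (adj : 'I_n -> 'I_m -> bool) (t : nat) :
  (forall i : 'I_n, exists j : 'I_m, adj i j) ->
  is_t_value adj t ->
  forall p : 'I_n -> nat, irreducible_pcw adj p ->
    (exists l, realized_in_degree adj p l /\ l * 2 <= max_check_sum adj p) /\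
    max_check_sum adj p <= t * max_check_degree adj.
Proof.
move=> hadj [tv _] p hirr.
have [[l0 hr] [[i0 hi0] _]] := hirr.
have hn := fun j => nec j hr.
have SM : forall j, Ssum adj p j <= max_check_sum adj p :=
  fun j => leq_bigmax (F := fun j => Ssum adj p j) j.
split.
  exists (max_check_sum adj p)./2; split.
    apply: suff => //.
      have [j hj] := hadj i0; have := (hn j).2 i0 hj; have := SM j.
      have := odd_double_half (max_check_sum adj p); rewrite -muln2.
      move: hi0; lia.
    by move=> j; exact: half_leq (SM j).
  by have := odd_double_half (max_check_sum adj p); rewrite -!muln2; lia.
apply/bigmax_leqP => j _.
apply: (@leq_trans (\sum_(i < n | adj i j) t)); first by apply: leq_sum => i _; exact: tv.
rewrite (eq_bigl (fun i => i \in [set i | adj i j])); last by move=> i; rewrite inE.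
rewrite sum_nat_const mulnC leq_mul2l; apply/orP; right.
exact: (@leq_bigmax _ (fun j0 : 'I_m => #|[set i | adj i j0]| ) j).
Qed.
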